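(* Let $2\leq m<n$ be integers. Then $$\textup{res}(\Psi_m(x),\Psi_n(x))=\textup{res}(\Phi_m(x),\Phi_n(x)).$$
   Context: The Fibonacci polynomials are defined by $F_1(x)=1$, $F_2(x)=x$, and $F_n(x)=xF_{n-1}(x)+F_{n-2}(x)$ for $n\geq 3$. For $n\geq 2$, the $n$-th fibotomic polynomial $\Psi_n(x)\in\mathbb{Z}[x]$ is the product of the monic irreducible factors of $F_n(x)$ which are not factors of $F_k(x)$ for any $k<n$; also $\Psi_1(x)=1$. For $n\ge2$, $\Psi_n$ is monic of degree $\varphi(n)$ (Euler's totient). $\Phi_n(x)$ is the $n$-th cyclotomic polynomial. For monic polynomials $f,g$ with roots $a_1,\dots,a_r$ and $b_1,\dots,b_s$, the resultant is $\textup{res}(f,g)=\prod_{i,j}(a_i-b_j)$. *)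

(* Defs.v *)
From HB Require Import structures.
From mathcomp Require Import all_boot all_order all_algebra all_field.
From Stdlib Require Import ClassicalEpsilon.
Set Implicit Arguments. Unset Strict Implicit. Unset Printing Implicit Defensive.
Import GRing.Theory Num.Theory.
Local Open Scope ring_scope.

(* Fibonacci polynomials in Z[x]: F_0 = 0, F_1 = 1, F_{n+2} = x F_{n+1} + F_n
   (so F_2 = x, matching the paper). *)
Fixpoint fibpoly (n : nat) : {poly int} :=
  match n with
  | 0 => 0
  | 1 => 1
  | (k.+1 as n').+1 => 'X * fibpoly n' + fibpoly k
  end.

Definition dvdZx (q p : {poly int}) : Prop := exists r, p = q * r.
Definition irredZx (q : {poly int}) : Prop :=
  q != 0 /\ q \isn't a GRing.unit /\
  forall a b : {poly int}, q = a * b -> a \is a GRing.unit \/ b \is a GRing.unit.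

Definition fibotomic_factors (n : nat) (s : seq {poly int}) : Prop :=
  uniq s /\ forall q : {poly int}, q \in s <->
    [/\ q \is monic, irredZx q, dvdZx q (fibpoly n) &
        forall k : nat, (1 <= k < n)%N -> ~ dvdZx q (fibpoly k)].

Definition fibotomic (n : nat) : {poly int} :=
  if (n <= 1)%N then 1
  else \prod_(q <- epsilon (inhabits [::]) (fibotomic_factors n)) q.

Definition rootsC (p : {poly int}) : seq algC :=
  sval (closed_field_poly_normal (map_poly intr p : {poly algC})).

(* resultant of (monic) polynomials: prod_{i,j} (a_i - b_j) *)
Definition resC (f g : {poly int}) : algC :=
  \prod_(a <- rootsC f) \prod_(b <- rootsC g) (a - b).

(* Main.v *)
Require Import Defs.
From HB Require Import structures.
From mathcomp Require Import all_boot all_order all_algebra all_field.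
From mathcomp Require Import ring.
Set Implicit Arguments. Unset Strict Implicit. Unset Printing Implicit Defensive.
Import GRing.Theory Num.Theory.
Local Open Scope ring_scope.

Notation fC n := (map_poly intr (fibpoly n) : {poly algC}).

Lemma fibSS k : fibpoly k.+2 = 'X * fibpoly k.+1 + fibpoly k.
Proof. by []. Qed.

Lemma fC_SS k : fC k.+2 = 'X * fC k.+1 + fC k.
Proof. by rewrite fibSS rmorphD rmorphM /= map_polyX. Qed.

Lemma fC_horner_SS k x : (fC k.+2).[x] = x * (fC k.+1).[x] + (fC k).[x].
Proof. by rewrite fC_SS hornerD [_ * fC _]mulrC hornerMX mulrC. Qed.

Lemma fC0 : fC 0 = 0. Proof. by rewrite /= map_poly0. Qed.
Lemma fC1 : fC 1 = 1. Proof. by rewrite /= rmorph1. Qed.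

Lemma fib_binet n (w c : algC) : w * c = -1 ->
  (w - c) * (fC n).[w + c] = w ^+ n - c ^+ n.
Proof.
move=> wc.
suff: (w - c) * (fC n).[w + c] = w ^+ n - c ^+ n /\
      (w - c) * (fC n.+1).[w + c] = w ^+ n.+1 - c ^+ n.+1 by case.
elim: n => [|n [IH1 IH2]].
  by rewrite fC0 fC1 horner0 hornerC !expr0 expr1 subrr mulr0 mulr1.
split=> //; rewrite fC_horner_SS mulrDr mulrCA IH2 IH1.
have E : (w + c) * (w ^+ n.+1 - c ^+ n.+1) + (w ^+ n - c ^+ n) =
  w ^+ n.+2 - c ^+ n.+2 + (w * c + 1) * (w ^+ n - c ^+ n).
  by rewrite !exprS; ring.
by rewrite E wc addNr mul0r addr0.
Qed.

Lemma fib_double n (w : algC) : w * w = -1 ->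
  (fC n.+1).[w + w] = n.+1%:R * w ^+ n.
Proof.
move=> ww.
suff: (fC n.+1).[w + w] = n.+1%:R * w ^+ n /\
      (fC n.+2).[w + w] = n.+2%:R * w ^+ n.+1 by case.
elim: n => [|n [IH1 IH2]].
  rewrite fC_horner_SS fC1 fC0 !hornerE.
  by split; rewrite // expr1 mulr_natl mulr2n.
split=> //; rewrite fC_horner_SS IH2 IH1.
have E : (w + w) * (n.+2%:R * w ^+ n.+1) + n.+1%:R * w ^+ n =
   n.+3%:R * w ^+ n.+2 + (w * w + 1) * (n.+1%:R * w ^+ n).
  rewrite !exprS -!natr1. ring.
by rewrite E ww addNr mul0r addr0.
Qed.

Lemma root_fC n x w : (0 < n)%N -> w ^+ 2 - x * w - 1 = 0 ->
  root (fC n) x = ((- w ^+ 2) ^+ n == 1) && (- w ^+ 2 != 1).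
Proof.
move=> n0 hw; set c := x - w.
have wc : w * c = -1.
  apply/eqP; rewrite -subr_eq0 /c.
  have -> : w * (x - w) - -1 = - (w ^+ 2 - x * w - 1) by ring.
  by rewrite hw oppr0.
have xE : x = w + c by rewrite /c addrC subrK.
have w0 : w != 0 by apply/eqP => w0; move: wc; rewrite w0 mul0r => /eqP; rewrite eq_sym oppr_eq0 oner_eq0.
have c0 : c != 0 by apply/eqP => c0; move: wc; rewrite c0 mulr0 => /eqP; rewrite eq_sym oppr_eq0 oner_eq0.
have uE : - w ^+ 2 = 1 <-> w = c.
  split=> [h|E].
    apply: (mulfI w0); transitivity (-1 : algC); last by symmetry; exact: wc.
    by rewrite -expr2 -h opprK.
  by rewrite expr2 {2}E wc opprK.
case: (eqVneq w c) => [wcE | wnc].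
  have -> : (- w ^+ 2 != 1) = false by apply/negbF/eqP; apply/uE.
  rewrite andbF; apply/negbTE.
  rewrite xE -wcE; case: n n0 => // n _.
  rewrite /root fib_double; last by rewrite {2}wcE.
  by rewrite mulf_neq0 ?pnatr_eq0 // expf_neq0.
have -> : (- w ^+ 2 != 1) = true by apply/negP => /eqP/uE; apply/eqP.
rewrite andbT /root.
have wcn : w - c != 0 by rewrite subr_eq0.
have H := mulf_eq0 (w - c) ((fC n).[x]); rewrite (negbTE wcn) /= in H.
rewrite -H xE fib_binet // subr_eq0.
have key : (- w ^+ 2) ^+ n * c ^+ n = w ^+ n.
  rewrite -exprMn; congr (_ ^+ n).
  have -> : - w ^+ 2 * c = - (w * c) * w by rewrite expr2; ring.
  by rewrite wc opprK mul1r.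
rewrite -key -{2}[c ^+ n]mul1r; apply/idP/idP => /eqP h; apply/eqP.
  by apply: (mulIf (expf_neq0 n c0)).
by rewrite h.
Qed.

Lemma fib_size_monic n : size (fibpoly n.+1) = n.+1 /\ fibpoly n.+1 \is monic.
Proof.
suff: (size (fibpoly n.+1) = n.+1 /\ fibpoly n.+1 \is monic) /\
      (size (fibpoly n.+2) = n.+2 /\ fibpoly n.+2 \is monic) by case.
elim: n => [|n [[s1 m1] [s2 m2]]].
  split; first by rewrite /= size_poly1 monic1.
  rewrite fibSS /= mulr1 addr0 size_polyX; split => //; exact: monicX.
have hs : size ('X * fibpoly n.+2) = n.+3.
  by rewrite mulrC size_mulX ?s2 // -size_poly_eq0 s2.
have lt : (size (fibpoly n.+1) < size ('X * fibpoly n.+2)%R)%N by rewrite hs s1.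
split=> //; rewrite fibSS; split.
  by rewrite size_polyDl.
rewrite monicE lead_coefDl // mulrC lead_coefMX; exact: m2.
Qed.

Lemma quad_cases (w c t : algC) : w * c = -1 ->
  t ^+ 2 - (w + c) * t - 1 = 0 -> t = w \/ t = c.
Proof.
move=> wc h.
have : (t - w) * (t - c) = 0.
  rewrite -h; have -> : t ^+ 2 - (w + c) * t - 1 = t ^+ 2 - (w + c) * t + w * c by rewrite wc.
  ring.
by move/eqP; rewrite mulf_eq0 !subr_eq0 => /orP[/eqP|/eqP]; [left|right].
Qed.

Lemma quad_root (w c : algC) : w * c = -1 -> w ^+ 2 - (w + c) * w - 1 = 0.
Proof.
move=> wc; have -> : w ^+ 2 - (w + c) * w - 1 = - (w * c) - 1 by ring.
by rewrite wc opprK subrr.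
Qed.

Lemma rootsC_spec (p : {poly int}) :
  map_poly intr p = lead_coef (map_poly intr p : {poly algC}) *:
     \prod_(z <- rootsC p) ('X - z%:P).
Proof. exact: (svalP (closed_field_poly_normal _)). Qed.

Lemma rootsC_monic (p : {poly int}) : p \is monic ->
  map_poly intr p = \prod_(z <- rootsC p) ('X - z%:P).
Proof.
move=> mp; rewrite {1}rootsC_spec lead_coef_map_inj; [|move=> a b /eqP; rewrite eqr_int => /eqP //|by rewrite mulr0z].
by rewrite (monicP mp) scale1r.
Qed.

Lemma rootsC_perm (p : {poly int}) (l : seq algC) : p \is monic ->
  map_poly intr p = \prod_(z <- l) ('X - z%:P) -> perm_eq (rootsC p) l.
Proof. by move=> mp E; apply: prod_XsubC_eq; rewrite -rootsC_monic. Qed.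

Lemma size_rootsC_fib n : size (rootsC (fibpoly n.+1)) = n.
Proof.
have [s m] := fib_size_monic n.
apply/eqP; rewrite -eqSS -(size_prod_XsubC _ id) -rootsC_monic //.
rewrite size_map_inj_poly ?s //.
by move=> a b /eqP; rewrite eqr_int => /eqP.
Qed.

From mathcomp Require Import zify.
From Stdlib Require Import ClassicalEpsilon.

Lemma mem_rootsC (p : {poly int}) x : p \is monic ->
  (x \in rootsC p) = root (map_poly intr p) x.
Proof. by move=> mp; rewrite rootsC_monic // root_prod_XsubC. Qed.

Lemma uniq_rootsC_fib n : uniq (rootsC (fibpoly n.+1)).
Proof.
set N := n.+1.
have [z pz] := @C_prim_root_exists (2 * N)%N isT.
have [_ mN] := fib_size_monic n.
pose w k : algC := 'i * z ^+ k.
pose c k : algC := 'i * z ^+ (2 * N - k).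
have wc k : (k <= 2 * N)%N -> w k * c k = -1.
  move=> hk; rewrite /w /c mulrACA -expr2 sqrCi -exprD subnKC //.
  by rewrite prim_expr_order // mulr1.
have zk j k : (j < 2 * N)%N -> (k < 2 * N)%N -> z ^+ j = z ^+ k -> j = k.
  move=> hj hk /eqP; rewrite (eq_prim_root_expr pz) !modn_small //.
  by move/eqP.
have wI j k : w j = w k -> z ^+ j = z ^+ k.
  by move/(mulfI (@neq0Ci algC)).
pose S := [seq w k + c k | k <- iota 1 n].
have memS : {subset S <= rootsC (fibpoly N)}.
  move=> x /mapP[k]; rewrite mem_iota => /andP[k1 k2] ->.
  rewrite mem_rootsC // /root.
  have wck := wc k ltac:(lia).
  have wnc : w k - c k != 0.
    rewrite subr_eq0; apply/negP => /eqP/wI/zk; lia.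
  have := fib_binet N wck.
  have -> : w k ^+ N = c k ^+ N.
    rewrite /w /c !exprMn -!exprM; congr (_ * _).
    apply/eqP; rewrite (eq_prim_root_expr pz).
    have -> : ((2 * N - k) * N = (N - k) * (2 * N) + k * N)%N by nia.
    by rewrite modnMDl.
  by rewrite subrr => /eqP; rewrite mulf_eq0 (negbTE wnc).
have uS : uniq S.
  rewrite map_inj_in_uniq ?iota_uniq // => j k.
  rewrite !mem_iota => /andP[j1 j2] /andP[k1 k2] E.
  have := quad_root (wc k ltac:(lia)); rewrite -E.
  case/(quad_cases (wc j ltac:(lia))) => [/wI/zk|/(mulfI (@neq0Ci algC))/zk]; lia.
apply: (leq_size_uniq uS memS).
by rewrite size_rootsC_fib size_map size_iota.
Qed.

Definition wf (a : algC) : algC := (a + sqrtC (a ^+ 2 + 4)) / 2.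

Lemma wf_quad a : (wf a) ^+ 2 - a * wf a - 1 = 0.
Proof.
rewrite /wf; set s := sqrtC _.
have hs : s ^+ 2 = a ^+ 2 + 4 by rewrite /s sqrtCK.
have h2 : (2 : algC) != 0 by rewrite pnatr_eq0.
apply/eqP; rewrite -(mulIr_eq0 _ (mulIf (expf_neq0 2 h2))).
have -> : ((a + s) / 2) ^+ 2 - a * ((a + s) / 2) - 1 = (s ^+ 2 - a ^+ 2 - 4) / 4.
  by field.
by rewrite hs; apply/eqP; field.
Qed.

Lemma prim_char (u : algC) n : (0 < n)%N ->
  n.-primitive_root u = (u ^+ n == 1) && [forall k : 'I_n, (0 < k)%N ==> (u ^+ k != 1)].
Proof.
move=> n0; apply/idP/idP.
  move=> pu; rewrite prim_expr_order // eqxx /=; apply/forallP => k; apply/implyP => k0.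
  rewrite -(prim_order_dvd pu); apply/negP => /(dvdn_leq k0); rewrite leqNgt ltn_ord.
  by [].
case/andP => un /forallP hk; rewrite /primitive_root_of_unity n0 /=.
apply/forallP => i; rewrite unity_rootE.
case: (eqVneq i.+1 n) => [->|ne]; first by rewrite un.
have lt : (i.+1 < n)%N by rewrite ltn_neqAle ne ltn_ord.
by have := hk (Ordinal lt); move/implyP/(_ isT) => /negbTE ->.
Qed.

Definition newroot n (x : algC) : bool :=
  root (fC n) x && [forall k : 'I_n, (0 < k)%N ==> ~~ root (fC k) x].

Lemma newroot_prim n x w : (2 <= n)%N -> w ^+ 2 - x * w - 1 = 0 ->
  newroot n x = n.-primitive_root (- w ^+ 2).
Proof.
move=> n2 hw; rewrite prim_char; last by lia.
rewrite /newroot (root_fC _ hw); last by lia.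
set u := - w ^+ 2.
apply/idP/idP.
  case/andP => /andP[-> u1] /forallP hk /=; apply/forallP => k; apply/implyP => k0.
  by have := hk k; rewrite k0 /= (root_fC _ hw) // negb_and u1 orbF.
case/andP => un /forallP hk.
have u1 : u != 1.
  have n1 : (1 < n)%N by lia.
  by have := hk (Ordinal n1); rewrite expr1.
rewrite un u1 /=; apply/forallP => k; apply/implyP => k0.
by rewrite (root_fC _ hw) // negb_and (implyP (hk k) k0).
Qed.

Notation pZtoC p := (map_poly intr p : {poly algC}).

Lemma intrC_inj : injective (intr : int -> algC).
Proof. by move=> a b /eqP; rewrite eqr_int => /eqP. Qed.

Lemma size_pZtoC (p : {poly int}) : size (pZtoC p) = size p.
Proof. by rewrite size_map_inj_poly //; exact: intrC_inj. Qed.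

Lemma lead_pZtoC (p : {poly int}) : lead_coef (pZtoC p) = (lead_coef p)%:~R.
Proof. by rewrite lead_coef_map_inj //; exact: intrC_inj. Qed.

Lemma minC_dvd b (f : {poly int}) : root (pZtoC f) b -> minCpoly b %| pZtoC f.
Proof.
have [p [Dp mp] rt] := minCpolyP b.
have E : pZtoC f = map_poly ratr (map_poly intr f : {poly rat}).
  by rewrite -map_poly_comp; apply: eq_map_poly => z /=; rewrite rmorph_int.
by rewrite Dp E dvdp_map -rt -E.
Qed.

Definition Mz (b : algC) : {poly int} := map_poly Num.floor (minCpoly b).

Section MinZ.
Variable b : algC.
Hypothesis Ab : b \in Aint.

Lemma Mz_C : pZtoC (Mz b) = minCpoly b.
Proof. exact: floorpK. Qed.

Lemma Mz_monic : Mz b \is monic.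
Proof.
have := minCpoly_monic b; rewrite -Mz_C !monicE lead_pZtoC.
by move/eqP => h; apply/eqP; apply: intrC_inj; rewrite h mulr1z.
Qed.

Lemma size_Mz : (1 < size (Mz b))%N.
Proof. by rewrite -size_pZtoC Mz_C size_minCpoly. Qed.

Lemma Mz_dvd (f : {poly int}) : root (pZtoC f) b -> exists r, f = Mz b * r.
Proof.
move=> rf; have mM := Mz_monic.
have E := Pdiv.IdomainMonic.divp_eq mM f.
exists (f %/ Mz b); rewrite mulrC.
suff m0 : f %% Mz b = 0 by rewrite {1}E m0 addr0.
have hd : minCpoly b %| pZtoC (f %% Mz b).
  have := minC_dvd rf; rewrite {1}E rmorphD rmorphM /= Mz_C.
  by rewrite dvdp_addr // dvdp_mull.
apply/eqP; rewrite -size_poly_eq0 -size_pZtoC size_poly_eq0.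
apply/negP => /negP nz; have := dvdp_leq nz hd.
have h := Pdiv.Idomain.ltn_modp f (Mz b); rewrite monic_neq0 // in h.
by rewrite size_pZtoC -Mz_C size_pZtoC leqNgt h.
Qed.

Lemma Mz_not_unit : Mz b \isn't a GRing.unit.
Proof. by rewrite poly_unitE negb_and; apply/orP; left; rewrite neq_ltn size_Mz orbT. Qed.

Lemma Mz_split_unit (a c : {poly int}) : Mz b = a * c -> root (pZtoC a) b ->
  c \is a GRing.unit.
Proof.
move=> E ra.
have nz : a * c != 0 by rewrite -E monic_neq0 // Mz_monic.
have a0 : a != 0 by apply: contraNneq nz => ->; rewrite mul0r.
have c0 : c != 0 by apply: contraNneq nz => ->; rewrite mulr0.
have pa0 : pZtoC a != 0 by rewrite -size_poly_eq0 size_pZtoC size_poly_eq0.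
have hle := dvdp_leq pa0 (minC_dvd ra).
rewrite -Mz_C !size_pZtoC E size_mul // in hle.
have ha : (0 < size a)%N by rewrite size_poly_gt0.
have hc : (0 < size c)%N by rewrite size_poly_gt0.
have hle2 : ((size a + size c).-1 <= size a)%N := hle.
have sc : size c = 1%N by clear -hle2 ha hc; lia.
rewrite poly_unitE sc eqxx /=.
have := Mz_monic; rewrite monicE E lead_coefM => /eqP lc.
have : lead_coef c \is a GRing.unit by apply/unitrPr; exists (lead_coef a); rewrite mulrC lc.
by rewrite lead_coefE sc.
Qed.

Lemma Mz_irred : irredZx (Mz b).
Proof.
split; first by rewrite monic_neq0 // Mz_monic.
split; first exact: Mz_not_unit.
move=> a c E.
have : root (pZtoC (Mz b)) b by rewrite Mz_C root_minCpoly.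
rewrite E rmorphM /= /root hornerM mulf_eq0 => /orP[ra|rc].
  by right; exact: (Mz_split_unit E ra).
by left; apply: (Mz_split_unit (a := c) (c := a)); rewrite // mulrC.
Qed.

Lemma Mz_unique (q : {poly int}) : q \is monic -> irredZx q -> root (pZtoC q) b ->
  q = Mz b.
Proof.
move=> mq [_ [_ iq]] rq.
have [r E] := Mz_dvd rq.
case: (iq _ _ E) => [uM|ur]; first by move: Mz_not_unit; rewrite uM.
move: ur; rewrite poly_unitE => /andP[/eqP sr _].
have Er : r = (r`_0)%:P by apply: size1_polyC; rewrite sr.
have := mq; rewrite monicE E lead_coefM (monicP Mz_monic) mul1r lead_coefE sr /= => /eqP r1.
by rewrite Er r1 mulr1.
Qed.
End MinZ.

Lemma Aint_fib n x : root (fC n.+1) x -> x \in Aint.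
Proof.
move=> rx; apply: (root_monic_Aint rx).
  by rewrite monicE lead_pZtoC (monicP (fib_size_monic n).2) mulr1z.
by apply/polyOverP => i; rewrite coef_map intr_int.
Qed.

Lemma prod_dvd (I : eqType) (l : seq I) (F : I -> {poly algC}) (g : {poly algC}) :
  (forall i, i \in l -> F i %| g) ->
  (forall i j, i \in l -> j \in l -> i != j -> forall x, root (F i) x -> ~~ root (F j) x) ->
  uniq l -> \prod_(i <- l) F i %| g.
Proof.
elim: l => [|i l IH] hd hc /=; first by rewrite big_nil dvd1p.
case/andP => il ul; rewrite big_cons Gauss_dvdp.
  rewrite hd ?mem_head //= IH // => [j jl|j k jl kl]; first by rewrite hd // inE jl orbT.
  by apply: hc; rewrite inE ?jl ?kl orbT.
apply: Pdiv.ClosedField.root_coprimep => x rx; rewrite horner_prod prodf_seq_neq0; apply/allP => j jl /=.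
apply: (hc i j); rewrite ?mem_head ?inE ?jl ?orbT //.
by apply: contraNneq il => ->.
Qed.

Definition Bl n := [seq x <- rootsC (fibpoly n) | newroot n x].
Definition Sf n := undup [seq Mz x | x <- Bl n].

Section Fibotomic.
Variable n : nat.
Hypothesis n2 : (2 <= n)%N.

Lemma fibn_monic : fibpoly n \is monic.
Proof. by case: n n2 => // k _; exact: (fib_size_monic k).2. Qed.

Lemma Aint_fibn x : root (fC n) x -> x \in Aint.
Proof. by case: n n2 => // k _; exact: Aint_fib. Qed.

Lemma root_dvdZx (q f : {poly int}) x : dvdZx q f -> root (pZtoC q) x -> root (pZtoC f) x.
Proof. by case=> r ->; rewrite rmorphM /= /root hornerM => /eqP->; rewrite mul0r. Qed.

Lemma core_fac q x : q \is monic -> irredZx q -> dvdZx q (fibpoly n) ->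
  (forall k, (1 <= k < n)%N -> ~ dvdZx q (fibpoly k)) -> root (pZtoC q) x ->
  [/\ newroot n x, q = Mz x & x \in rootsC (fibpoly n)].
Proof.
move=> mq iq dq nd rq.
have rn : root (fC n) x by apply: root_dvdZx dq rq.
have Ax := Aint_fibn rn.
have qE := Mz_unique Ax mq iq rq.
split=> //; last by rewrite mem_rootsC // fibn_monic.
rewrite /newroot rn /=; apply/forallP => k; apply/implyP => k0; apply/negP => rk.
have [r Er] := Mz_dvd Ax rk.
by apply: (nd k); [rewrite k0 ltn_ord | exists r; rewrite qE].
Qed.

Lemma Sf_mem x : x \in rootsC (fibpoly n) -> newroot n x -> Mz x \in Sf n.
Proof. by move=> xR nx; rewrite mem_undup; apply: map_f; rewrite mem_filter nx xR. Qed.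

Lemma Sf_spec : fibotomic_factors n (Sf n).
Proof.
split; first exact: undup_uniq.
move=> q; split.
  rewrite mem_undup => /mapP[x]; rewrite mem_filter => /andP[nx xR] ->.
  have rn : root (fC n) x by case/andP: nx.
  have Ax := Aint_fibn rn.
  split; [exact: Mz_monic | exact: Mz_irred | exact: Mz_dvd |].
  move=> k /andP[k1 k2] [r Er].
  have rk : root (fC k) x.
    by apply: (@root_dvdZx (Mz x)); [exists r | rewrite Mz_C // root_minCpoly].
  by case/andP: nx => _ /forallP/(_ (Ordinal k2)) /=; rewrite k1 /= rk.
case=> mq iq dq nd.
have : size (pZtoC q) != 1%N.
  rewrite size_pZtoC; apply/negP => /eqP s1.
  have Eq : q = (q`_0)%:P by apply: size1_polyC; rewrite s1.
  have := mq; rewrite monicE lead_coefE s1 /= => /eqP q1.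
  by case: iq => _ [nu _]; move: nu; rewrite Eq q1 unitr1.
case/closed_rootP => x rx.
have [nx -> xR] := core_fac mq iq dq nd rx.
exact: Sf_mem.
Qed.

Lemma fibotomic_prod : fibotomic n = \prod_(q <- Sf n) q.
Proof.
rewrite /fibotomic; have -> : (n <= 1)%N = false by apply/negbTE; rewrite -ltnNge.
have H := epsilon_spec (inhabits [::]) (fibotomic_factors n) (ex_intro _ (Sf n) Sf_spec).
apply: perm_big; apply: uniq_perm; [exact: H.1 | exact: Sf_spec.1 |] => q.
by apply/idP/idP => h; [apply/(Sf_spec.2 q); apply/(H.2 q) | apply/(H.2 q); apply/(Sf_spec.2 q)].
Qed.

Lemma Sf_elem q : q \in Sf n ->
  [/\ q \is monic, irredZx q, dvdZx q (fibpoly n)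
    & forall k, (1 <= k < n)%N -> ~ dvdZx q (fibpoly k)].
Proof. by move/(Sf_spec.2 q). Qed.

Lemma root_prodS (S : seq {poly int}) x :
  root (\prod_(q <- S) pZtoC q) x = has (fun q => root (pZtoC q) x) S.
Proof.
rewrite /root horner_prod; apply/idP/idP => [/eqP h | /hasP [q qS rq]].
  have := prodf_seq_neq0 S xpredT (fun q => (pZtoC q).[x]).
  rewrite h eqxx => /esym /allPn [q qS /=]; rewrite negbK => rq.
  by apply/hasP; exists q.
by apply/eqP; rewrite (big_rem q qS) /= (eqP rq) mul0r.
Qed.

Lemma rootsC_fibotomic : perm_eq (rootsC (fibotomic n)) (Bl n).
Proof.
have mS : \prod_(q <- Sf n) q \is monic.
  by rewrite big_seq; apply: monic_prod => q qS; case: (Sf_elem qS).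
set R := rootsC (fibpoly n).
have uR : uniq R by rewrite /R; case: n n2 => // k _; exact: uniq_rootsC_fib.
have hd : \prod_(q <- Sf n) pZtoC q %| \prod_(x <- R) ('X - x%:P).
  rewrite -rootsC_monic ?fibn_monic //; apply: prod_dvd.
  - move=> q /Sf_elem[_ _ [r ->] _]; rewrite rmorphM /=.
    by apply: dvdp_mulr; exact: dvdpp.
  - move=> i j iS jS ij x ri; apply/negP => rj.
    have [mi ii di ni] := Sf_elem iS; have [mj ij' dj nj] := Sf_elem jS.
    have [_ Ei _] := core_fac mi ii di ni ri.
    have [_ Ej _] := core_fac mj ij' dj nj rj.
    by move: ij; rewrite Ei Ej eqxx.
  - exact: undup_uniq.
have [m hm] := dvdp_prod_XsubC hd.
have E : \prod_(q <- Sf n) pZtoC q = \prod_(x <- mask m R) ('X - x%:P).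
  apply/eqP; rewrite -eqp_monic //; last exact: monic_prod_XsubC.
  have -> : \prod_(q <- Sf n) pZtoC q = pZtoC (\prod_(q <- Sf n) q) by rewrite rmorph_prod.
  by rewrite monicE lead_pZtoC (monicP mS).
apply: (perm_trans (rootsC_perm (l := mask m R) _ _)).
- by rewrite fibotomic_prod.
- by rewrite fibotomic_prod rmorph_prod E.
apply: uniq_perm; [exact: mask_uniq | exact: filter_uniq |] => x.
rewrite -root_prod_XsubC -E root_prodS mem_filter.
apply/idP/idP => [/hasP[q qS rq] | /andP[nx xR]].
  by have [mq iq dq nq] := Sf_elem qS; have [-> _ ->] := core_fac mq iq dq nq rq.
apply/hasP; exists (Mz x); first exact: Sf_mem.
have rn : root (fC n) x by case/andP: nx.
by rewrite Mz_C ?root_minCpoly // Aint_fibn.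
Qed.
End Fibotomic.

Lemma prim_inv k (u v : algC) : (0 < k)%N -> u * v = 1 ->
  k.-primitive_root u -> k.-primitive_root v.
Proof.
move=> k0 uv pu.
have u0 : u != 0 by apply: contra_eq_neq uv => ->; rewrite mul0r eq_sym oner_eq0.
have -> : v = u ^+ k.-1.
  apply: (mulfI u0); rewrite uv -exprS prednK //; exact/esym/(prim_expr_order pu).
rewrite (prim_root_exp_coprime _ pu); case: k k0 {pu} => // k _ /=.
exact: coprimenS.
Qed.

Lemma unity_norm k (z : algC) : (0 < k)%N -> z ^+ k = 1 -> z * z^* = 1.
Proof.
move=> k0 zk; rewrite -normCK.
have n1 : `|z| ^+ k == 1 by rewrite -normrX zk normr1.
by rewrite (pexpr_eq1 k0 (normr_ge0 _)) in n1; rewrite (eqP n1) expr1n.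
Qed.

Lemma wf_wc a : wf a * (a - wf a) = -1.
Proof.
have h := wf_quad a.
apply/eqP; rewrite -subr_eq0.
have -> : wf a * (a - wf a) - -1 = - ((wf a) ^+ 2 - a * wf a - 1) by ring.
by rewrite h oppr0.
Qed.

Lemma Lmem_any k a t : (0 < k)%N -> t ^+ 2 - a * t - 1 = 0 ->
  k.-primitive_root (- (wf a) ^+ 2) = k.-primitive_root (- t ^+ 2).
Proof.
move=> k0 ht.
have wc := wf_wc a.
have ha : a = wf a + (a - wf a) by rewrite addrC subrK.
rewrite {1}ha in ht.
case: (quad_cases wc ht) => ->; first by [].
have inv : (- wf a ^+ 2) * (- (a - wf a) ^+ 2) = 1.
  by rewrite mulrNN -exprMn wc sqrrN expr1n.
apply/idP/idP => h; first exact: (prim_inv k0 inv h).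
by apply: (prim_inv k0 _ h); rewrite mulrC.
Qed.

Definition pairs (T : Type) (f g : T -> algC) (L : seq T) : seq algC :=
  flatten [seq [:: f a; g a] | a <- L].

Lemma prod_pairs (T : Type) (f g : T -> algC) (L : seq T) (F : algC -> algC) :
  \prod_(x <- pairs f g L) F x = \prod_(a <- L) (F (f a) * F (g a)).
Proof.
elim: L => [|a L IH]; first by rewrite /pairs /= !big_nil.
by rewrite /pairs /= !big_cons -/(pairs f g L) IH mulrA.
Qed.

Lemma mem_pairs (T : eqType) (f g : T -> algC) (L : seq T) x :
  reflect (exists2 a, a \in L & x = f a \/ x = g a) (x \in pairs f g L).
Proof.
apply: (iffP flattenP) => [[s /mapP[a aL ->]]|[a aL h]].
  by rewrite !inE => /orP[/eqP|/eqP]; exists a => //; [left|right].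
exists [:: f a; g a]; first exact: map_f.
by rewrite !inE; case: h => ->; rewrite eqxx ?orbT.
Qed.

Lemma pairing (T : eqType) (sg : T -> T) (s : seq T) : uniq s ->
  (forall x, x \in s -> sg x \in s) -> (forall x, x \in s -> sg (sg x) = x) ->
  (forall x, x \in s -> sg x != x) ->
  exists t, perm_eq s (flatten [seq [:: x; sg x] | x <- t]).
Proof.
move: {2}(size s) (leqnn (size s)) => N; elim: N s => [|N IH] [|x s] //=.
  by exists [::].
  by exists [::].
move=> sz /andP[xs us] hc hi hf.
have sxs : sg x \in s.
  have := hc x (mem_head _ _); rewrite inE => /orP[/eqP h|//].
  by have := hf x (mem_head _ _); rewrite h eqxx.
set s2 := rem (sg x) s.
have us2 : uniq s2 by apply: rem_uniq.
have ms2 y : (y \in s2) = (y != sg x) && (y \in s) by rewrite mem_rem_uniq // inE.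
have [t Ht] : exists t, perm_eq s2 (flatten [seq [:: x; sg x] | x <- t]).
  apply: IH => //.
  - by rewrite size_rem //; move: sz; case: (size s) => //= k; lia.
  - move=> y; rewrite ms2 => /andP[ysx ys].
    have yxs : y \in x :: s by rewrite inE ys orbT.
    rewrite ms2; apply/andP; split.
      apply/eqP => h; have yx : y = x by rewrite -(hi y yxs) h hi // mem_head.
      by move: xs; rewrite -yx ys.
    have := hc y yxs; rewrite inE => /orP[/eqP h|//].
    by move: ysx; rewrite -h hi // eqxx.
  - by move=> y; rewrite ms2 => /andP[_ ys]; apply: hi; rewrite inE ys orbT.
  - by move=> y; rewrite ms2 => /andP[_ ys]; apply: hf; rewrite inE ys orbT.
exists (x :: t) => /=; rewrite perm_cons.
by apply: (perm_trans (perm_to_rem sxs)); rewrite perm_cons.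
Qed.

Lemma size_pairs_flat (T : Type) (sg : T -> T) (t : seq T) :
  size (flatten [seq [:: x; sg x] | x <- t]) = (size t).*2.
Proof. by elim: t => //= x t ->; rewrite doubleS. Qed.

Lemma prod_flat (T : Type) (sg : T -> T) (t : seq T) (F : T -> algC) :
  \prod_(x <- flatten [seq [:: x; sg x] | x <- t]) F x = \prod_(x <- t) (F x * F (sg x)).
Proof.
elim: t => [|a t IH]; first by rewrite /= !big_nil.
by rewrite /= !big_cons IH mulrA.
Qed.

Lemma pairing_ge0 (T : eqType) (sg : T -> T) (s : seq T) (F : T -> algC) : uniq s ->
  (forall x, x \in s -> sg x \in s) -> (forall x, x \in s -> sg (sg x) = x) ->
  (forall x, x \in s -> sg x != x) -> (forall x, x \in s -> F (sg x) = (F x)^*) ->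
  0 <= \prod_(x <- s) F x.
Proof.
move=> us hc hi hf hF; have [t Ht] := pairing us hc hi hf.
rewrite (perm_big _ Ht) prod_flat big_seq; apply: prodr_ge0 => x xt.
have xs : x \in s by rewrite (perm_mem Ht); apply/flattenP; exists [:: x; sg x]; [exact: map_f | exact: mem_head].
by rewrite hF // mul_conjC_ge0.
Qed.

Lemma pairing_even (T : eqType) (sg : T -> T) (s : seq T) : uniq s ->
  (forall x, x \in s -> sg x \in s) -> (forall x, x \in s -> sg (sg x) = x) ->
  (forall x, x \in s -> sg x != x) -> ~~ odd (size s).
Proof.
move=> us hc hi hf; have [t Ht] := pairing us hc hi hf.
by rewrite (perm_size Ht) size_pairs_flat odd_double.
Qed.

Lemma pair_det (a v : algC) : v * (a - v) = -1 -> a = v - v^-1.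
Proof.
move=> h; have v0 : v != 0 by apply: contra_eq_neq h => ->; rewrite mul0r eq_sym oppr_eq0 oner_eq0.
apply: (mulfI v0); rewrite mulrBr mulfV //.
apply/eqP; rewrite -subr_eq0; have -> : v * a - (v * v - 1) = v * (a - v) + 1 by ring.
by rewrite h addNr.
Qed.

Lemma prim_k1 k : (2 <= k)%N -> ~~ k.-primitive_root (1 : algC).
Proof.
move=> k2; apply/negP => p1; have := prim_order_dvd p1 1; rewrite expr1 eqxx.
by move=> h; move: (dvdn_leq (isT : (0 < 1)%N) h); lia.
Qed.

Definition gw (a : algC) := a - wf a.
Definition Wl L := pairs wf gw L.

Lemma pair_mem_det a v : v = wf a \/ v = gw a -> a = v - v^-1.
Proof.
case=> ->; apply: pair_det; first exact: wf_wc.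
rewrite /gw; have -> : a - (a - wf a) = wf a by ring.
by rewrite mulrC wf_wc.
Qed.

Lemma Wl_uniq k L : (2 <= k)%N -> uniq L ->
  (forall a, a \in L -> k.-primitive_root (- (wf a) ^+ 2)) -> uniq (Wl L).
Proof.
move=> k2; elim: L => [|a L IH] //= /andP[aL uL] hL.
have nin v : v = wf a \/ v = gw a -> v \notin Wl L.
  move=> hv; apply/negP => /mem_pairs[b bL hb].
  by move: aL; rewrite (pair_mem_det hv) -(pair_mem_det hb) bL.
rewrite /Wl /pairs /= -/(pairs wf gw L) -/(Wl L).
rewrite inE negb_or !nin /=; try by [left | right].
rewrite IH //; last by move=> b bL; apply: hL; rewrite inE bL orbT.
rewrite !andbT; apply/eqP => E.
have : - wf a ^+ 2 = 1 by rewrite expr2 {2}E /gw wf_wc opprK.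
by move=> h; move: (hL a (mem_head _ _)); rewrite h (negbTE (prim_k1 k2)).
Qed.

Lemma gw_quad a : (gw a) ^+ 2 - a * gw a - 1 = 0.
Proof.
have h := wf_quad a; rewrite /gw.
have -> : (a - wf a) ^+ 2 - a * (a - wf a) - 1 = wf a ^+ 2 - a * wf a - 1 by ring.
exact: h.
Qed.

Lemma Wl_mem k L : (0 < k)%N ->
  (forall a, (a \in L) = k.-primitive_root (- (wf a) ^+ 2)) ->
  forall v, (v \in Wl L) = k.-primitive_root (- v ^+ 2).
Proof.
move=> k0 hL v; apply/idP/idP.
  case/mem_pairs => a aL [] ->; first by rewrite -hL.
  by rewrite -(Lmem_any k0 (gw_quad a)) -hL.
move=> pv.
have v0 : v != 0.
  apply: contraTneq pv => ->; rewrite expr0n /= oppr0; apply/negP => p0.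
  by have := prim_root_eq0 p0; rewrite eqxx => /esym/eqP; lia.
set a := v - v^-1.
have qv : v ^+ 2 - a * v - 1 = 0.
  by rewrite /a mulrBl mulVf // expr2; ring.
apply/mem_pairs; exists a; first by rewrite hL (Lmem_any k0 qv).
have := wf_wc a; move/quad_cases => /(_ v); rewrite /gw.
have -> : wf a + (a - wf a) = a by ring.
by case/(_ qv) => ->; [left | right].
Qed.

Definition sq (u : algC) := sqrtC (- u).
Definition nsq (u : algC) := - sq u.
Definition Vl Q := pairs sq nsq Q.

Lemma sq_det (u v : algC) : v = sq u \/ v = nsq u -> u = - v ^+ 2.
Proof. by case=> ->; rewrite /nsq /sq ?sqrrN sqrtCK opprK. Qed.

Lemma prim_neq0 k (u : algC) : (0 < k)%N -> k.-primitive_root u -> u != 0.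
Proof. by move=> k0 pu; rewrite (prim_root_eq0 pu) -lt0n k0. Qed.

Lemma Vl_uniq k Q : (0 < k)%N -> uniq Q ->
  (forall u, u \in Q -> k.-primitive_root u) -> uniq (Vl Q).
Proof.
move=> k0; elim: Q => [|u Q IH] //= /andP[uQ uniqQ] hQ.
have nin v : v = sq u \/ v = nsq u -> v \notin Vl Q.
  move=> hv; apply/negP => /mem_pairs[b bQ hb].
  by move: uQ; rewrite (sq_det hv) -(sq_det hb) bQ.
rewrite /Vl /pairs /= -/(pairs sq nsq Q) -/(Vl Q).
rewrite inE negb_or !nin /=; try by [left | right].
rewrite IH //; last by move=> b bQ; apply: hQ; rewrite inE bQ orbT.
rewrite !andbT; apply/eqP => E.
have s0 : sq u = 0.
  have : sq u *+ 2 == 0 by rewrite mulr2n {2}E /nsq subrr.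
  by rewrite mulrn_eq0 /= => /eqP.
have := prim_neq0 k0 (hQ u (mem_head _ _)).
by rewrite (sq_det (or_introl (erefl (sq u)))) s0 expr0n oppr0 eqxx.
Qed.

Lemma Vl_mem k Q : (forall u, (u \in Q) = k.-primitive_root u) ->
  forall v, (v \in Vl Q) = k.-primitive_root (- v ^+ 2).
Proof.
move=> hQ v; apply/idP/idP.
  by case/mem_pairs => u uQ hv; rewrite -(sq_det hv) -hQ.
move=> pv; apply/mem_pairs; exists (- v ^+ 2); first by rewrite hQ.
have : (sq (- v ^+ 2)) ^+ 2 == v ^+ 2 by rewrite /sq opprK sqrtCK.
by rewrite eqf_sqr => /orP[/eqP h|/eqP h]; [left | right; rewrite /nsq h opprK].
Qed.

Lemma prod_V Q1 Q2 :
  \prod_(x <- Vl Q1) \prod_(y <- Vl Q2) (x - y) =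
  (\prod_(u <- Q1) \prod_(v <- Q2) (u - v)) ^+ 2.
Proof.
rewrite /Vl prod_pairs -prodrXl; apply: eq_bigr => u _.
rewrite !prod_pairs -big_split -prodrXl /=; apply: eq_bigr => v _.
have hs : sq u ^+ 2 = - u by rewrite sqrtCK.
have ht : sq v ^+ 2 = - v by rewrite sqrtCK.
rewrite /nsq.
have -> : (sq u - sq v) * (sq u - - sq v) * ((- sq u - sq v) * (- sq u - - sq v)) =
  (sq u ^+ 2 - sq v ^+ 2) ^+ 2 by ring.
by rewrite hs ht; ring.
Qed.

Lemma prod_W L1 L2 :
  \prod_(x <- Wl L1) \prod_(y <- Wl L2) (x - y) =
  \prod_(a <- L1) \prod_(b <- L2) (- (a - b) ^+ 2).
Proof.
rewrite /Wl prod_pairs; apply: eq_bigr => a _.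
rewrite !prod_pairs -big_split /=; apply: eq_bigr => b _.
have wa := wf_wc a; have wb := wf_wc b.
rewrite /gw.
set w := wf a; set v := wf b.
have e1 : (w - v) * (w - (b - v)) = w * (a - b) + (v * (b - v) - w * (a - w)) by ring.
have e2 : (a - w - v) * (a - w - (b - v)) = (a - w) * (a - b) + (v * (b - v) - w * (a - w)) by ring.
rewrite e1 e2 wa wb subrr !addr0.
have -> : w * (a - b) * ((a - w) * (a - b)) = (w * (a - w)) * (a - b) ^+ 2 by ring.
by rewrite wa mulN1r.
Qed.

Lemma conj_L k a : (0 < k)%N -> k.-primitive_root (- (wf a) ^+ 2) -> a^* = - a.
Proof.
move=> k0 pu; set w := wf a.
have wc : w * (a - w) = -1 := wf_wc a.
set c := a - w in wc.
have aE : a = w + c by rewrite /c; ring.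
clearbody c.
have w0 : w != 0 by apply: contra_eq_neq wc => ->; rewrite mul0r eq_sym oppr_eq0 oner_eq0.
have w4 : w ^+ (4 * k) = 1.
  have -> : (4 * k = 2 * 2 * k)%N by lia.
  by rewrite !exprM -sqrrN exprAC (prim_expr_order pu) expr1n.
have k4 : (0 < 4 * k)%N by lia.
have ww := unity_norm k4 w4.
have wcj : w^* = - c by apply: (mulfI w0); rewrite ww mulrN wc opprK.
have cj : c^* = - w.
  by have := congr1 (fun z => z^*) wcj; rewrite /= conjCK rmorphN => ->; rewrite opprK.
move: aE wcj cj; clearbody w => aE wcj cj.
have h : (w + c)^* = w^* + c^* by rewrite rmorphD.
by rewrite aE h wcj cj; ring.
Qed.

Lemma neg_L k a : (0 < k)%N ->
  k.-primitive_root (- (wf (- a)) ^+ 2) = k.-primitive_root (- (wf a) ^+ 2).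
Proof.
move=> k0; have q : (- wf a) ^+ 2 - (- a) * (- wf a) - 1 = 0.
  by rewrite sqrrN mulrNN; exact: wf_quad.
by rewrite (Lmem_any k0 q) sqrrN.
Qed.

Lemma prodN_seq (l : seq algC) (F : algC -> algC) :
  \prod_(x <- l) - F x = (-1) ^+ (size l) * \prod_(x <- l) F x.
Proof.
elim: l => [|x l IH]; first by rewrite !big_nil expr0 mulr1.
by rewrite !big_cons IH /= exprS; ring.
Qed.

Lemma reindex_perm (l : seq algC) (f : algC -> algC) (F : algC -> algC) :
  involutive f -> uniq l -> (forall x, (f x \in l) = (x \in l)) ->
  \prod_(x <- l) F x = \prod_(x <- l) F (f x).
Proof.
move=> fi ul hl; rewrite -(big_map f xpredT F); apply: perm_big.
apply: uniq_perm => //; first by rewrite map_inj_uniq //; exact: inv_inj.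
move=> y; apply/idP/idP => [yl | /mapP[x xl ->]]; last by rewrite hl.
by apply/mapP; exists (f y); rewrite ?fi // hl.
Qed.

Lemma prim_not2 k (u : algC) : (3 <= k)%N -> k.-primitive_root u -> u ^+ 2 != 1.
Proof.
move=> k3 pu; rewrite -(prim_order_dvd pu); apply/negP => /(dvdn_leq (isT : (0 < 2)%N)).
lia.
Qed.

Lemma zero_not_L k : (3 <= k)%N -> ~~ k.-primitive_root (- (wf 0) ^+ 2).
Proof.
move=> k3; apply/negP => p.
have h : wf 0 ^+ 2 = 1.
  by have := wf_quad 0; rewrite mul0r subr0 => /eqP; rewrite subr_eq0 => /eqP.
by have := prim_not2 k3 p; rewrite h sqrrN expr1n eqxx.
Qed.

Lemma conj_fixed k (v : algC) : (3 <= k)%N -> k.-primitive_root v -> v^* != v.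
Proof.
move=> k3 pv; apply/negP => /eqP e.
have := unity_norm (prim_order_gt0 pv) (prim_expr_order pv); rewrite e -expr2 => /eqP.
by apply/negP; exact: prim_not2 k3 pv.
Qed.

Lemma conj_prim k (v : algC) : k.-primitive_root v^* = k.-primitive_root v.
Proof. exact: fmorph_primitive_root. Qed.

Lemma negx0 (x : algC) : - x = x -> x = 0.
Proof.
move=> e; have : x *+ 2 == 0 by rewrite mulr2n -{1}e addNr.
by rewrite mulrn_eq0 /= => /eqP.
Qed.

Lemma main_res m n (L1 L2 Q1 Q2 : seq algC) : (2 <= m)%N -> (3 <= n)%N ->
  uniq L1 -> uniq L2 -> uniq Q1 -> uniq Q2 ->
  (forall a, (a \in L1) = m.-primitive_root (- (wf a) ^+ 2)) ->
  (forall a, (a \in L2) = n.-primitive_root (- (wf a) ^+ 2)) ->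
  (forall u, (u \in Q1) = m.-primitive_root u) ->
  (forall u, (u \in Q2) = n.-primitive_root u) ->
  \prod_(a <- L1) \prod_(b <- L2) (a - b) = \prod_(u <- Q1) \prod_(v <- Q2) (u - v).
Proof.
move=> m2 n3 u1 u2 v1 v2 h1 h2 g1 g2.
have m0 : (0 < m)%N by lia.
have n0 : (0 < n)%N by lia.
have pW : forall k L Q, (2 <= k)%N -> uniq L -> uniq Q ->
    (forall a, (a \in L) = k.-primitive_root (- (wf a) ^+ 2)) ->
    (forall u, (u \in Q) = k.-primitive_root u) -> perm_eq (Wl L) (Vl Q).
  move=> k L Q k2 uL uQ hL hQ; have k0 : (0 < k)%N by lia.
  apply: uniq_perm.
  - by apply: (Wl_uniq k2 uL) => a; rewrite hL.
  - by apply: (Vl_uniq k0 uQ) => u; rewrite hQ.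
  - by move=> v; rewrite (Wl_mem k0 hL) (Vl_mem hQ).
have ev : ~~ odd (size L2).
  apply: (pairing_even (sg := fun b => - b)) => //.
  - by move=> b; rewrite !h2 neg_L.
  - by move=> b _; rewrite opprK.
  - move=> b; rewrite h2 => pb; apply/negP => /eqP e.
    have b0 : b = 0 by apply: negx0.
    by move: pb; rewrite b0 (negbTE (zero_not_L n3)).
have sqE : (\prod_(a <- L1) \prod_(b <- L2) (a - b)) ^+ 2 =
           (\prod_(u <- Q1) \prod_(v <- Q2) (u - v)) ^+ 2.
  have P1 := pW _ _ _ m2 u1 v1 h1 g1; have P2 := pW _ _ _ (ltnW n3) u2 v2 h2 g2.
  rewrite perm_sym in P1; rewrite perm_sym in P2.
  rewrite -(prod_V Q1 Q2) (perm_big (Wl L1) P1).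
  have E2 : forall x, \prod_(y <- Vl Q2) (x - y) = \prod_(y <- Wl L2) (x - y) by move=> x; apply: perm_big.
  rewrite (eq_bigr _ (fun x _ => E2 x)).
  rewrite prod_W -prodrXl; apply: eq_bigr => a _.
  rewrite prodN_seq -signr_odd (negbTE ev) expr0 mul1r -prodrXl //.
have ge1 : 0 <= \prod_(a <- L1) \prod_(b <- L2) (a - b).
  rewrite exchange_big /=.
  apply: (pairing_ge0 (sg := fun b => - b)) => //.
  - by move=> b; rewrite !h2 neg_L.
  - by move=> b _; rewrite opprK.
  - move=> b; rewrite h2 => pb; apply/negP => /eqP e.
    have b0 : b = 0 by apply: negx0.
    by move: pb; rewrite b0 (negbTE (zero_not_L n3)).
  - move=> b bL /=.
    have cb : b^* = - b by apply: (conj_L n0); rewrite -h2.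
    rewrite rmorph_prod (@reindex_perm L1 (fun a => - a) (fun a => a - - b)) //=;
      [|exact: opprK | by move=> a; rewrite !h1 neg_L].
    rewrite big_seq [RHS]big_seq; apply: eq_bigr => a aL.
    have ca : a^* = - a by apply: (conj_L m0); rewrite -h1.
    have e : (a - b)^* = a^* - b^* by rewrite rmorphB.
    by rewrite e ca cb.
have ge2 : 0 <= \prod_(u <- Q1) \prod_(v <- Q2) (u - v).
  rewrite exchange_big /=.
  apply: (pairing_ge0 (sg := fun v => v^*)) => //.
  - by move=> v; rewrite !g2 conj_prim.
  - by move=> v _; rewrite conjCK.
  - by move=> v; rewrite g2 => pv; apply: (conj_fixed n3).
  - move=> v vQ /=.
    rewrite rmorph_prod (@reindex_perm Q1 (fun u => u^*) (fun u => u - v^*)) //=;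
      [| exact: conjCK | by move=> u; rewrite !g1 conj_prim].
    apply: eq_bigr => u _.
    have e : (u - v)^* = u^* - v^* by rewrite rmorphB.
    by rewrite e.
by apply/eqP; rewrite -(eqrXn2 (isT : (0 < 2)%N) ge1 ge2) sqE.
Qed.

Lemma L_spec k : (2 <= k)%N -> uniq (rootsC (fibotomic k)) /\
  forall a, (a \in rootsC (fibotomic k)) = k.-primitive_root (- (wf a) ^+ 2).
Proof.
move=> k2; have P := rootsC_fibotomic k2.
have uR : uniq (rootsC (fibpoly k)) by case: k k2 {P} => // j _; exact: uniq_rootsC_fib.
split; first by rewrite (perm_uniq P) filter_uniq.
move=> a; rewrite (perm_mem P) mem_filter -(newroot_prim k2 (wf_quad a)).
apply/andP/idP => [[] // | na]; split => //.
by rewrite mem_rootsC ?fibn_monic //; case/andP: na.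
Qed.

Lemma Q_spec k : (0 < k)%N -> uniq (rootsC 'Phi_k) /\
  forall u, (u \in rootsC 'Phi_k) = k.-primitive_root u.
Proof.
move=> k0; have [z pz] := C_prim_root_exists k0.
split; last first.
  move=> u; rewrite mem_rootsC ?Cyclotomic_monic // (Cintr_Cyclotomic pz).
  exact: root_cyclotomic.
have P : perm_eq (rootsC 'Phi_k) [seq z ^+ i | i : 'I_k in [pred i : 'I_k | coprime i k]].
  apply: rootsC_perm; first exact: Cyclotomic_monic.
  by rewrite big_image (Cintr_Cyclotomic pz).
rewrite (perm_uniq P) map_inj_uniq ?enum_uniq // => i j /eqP.
rewrite (eq_prim_root_expr pz) !modn_small // => /eqP; exact: val_inj.
Qed.

Theorem mainTheorem9 (m n : nat) :
  (2 <= m)%N -> (m < n)%N -> resC (fibotomic m) (fibotomic n) = resC 'Phi_m 'Phi_n.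
Proof.
move=> m2 mn; have n3 : (3 <= n)%N by lia.
have [u1 h1] := L_spec m2; have [u2 h2] := L_spec (ltnW n3).
have [v1 g1] := Q_spec (ltnW m2 : (0 < m)%N); have [v2 g2] := Q_spec (ltnW (ltnW n3) : (0 < n)%N).
exact: (main_res m2 n3 u1 u2 v1 v2 h1 h2 g1 g2).
Qed.
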